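(* For every admissible word $\omega$, $V_\omega=B_\omega\cap Z_\omega=\mathbb{Z}\{\delta^j_\omega: j\in X(\omega)\}$.
   Context: Let $[n]=\{1,\dots,n\}$, $e_1,\dots,e_n$ the standard basis of $\mathbb{Z}^n$. The alphabet is $L=\{1,\dots,n,1^\infty,\dots,n^\infty,\mathsf{ext}\}$ (each $j^\infty$ and $\mathsf{ext}$ is a single letter); $\varepsilon$ is the empty word, $*$ concatenation. A finite word $\omega$ over $L$ is admissible if: (i) whenever $j^\infty$ occurs, the subsequent part of $\omega$ contains neither $j$ nor $j^\infty$; (ii) the only letter allowed directly after $j^\infty$ is $\mathsf{ext}$; (iii) every $\mathsf{ext}$ occurs directly after some $j^\infty$. $X(\omega)$ is the set of $j$ such that $j^\infty\mathsf{ext}$ is a subword of $\omega$, and $Y(\omega)=[n]\setminus X(\omega)$. Define recursively $\delta^i_\omega\in\mathbb{Z}^n$: $\delta^i_\varepsilon=e_i$; $\delta^i_{\omega*j^\infty}=\delta^i_{\omega*\mathsf{ext}}=\delta^i_\omega$; $\delta^i_{\omega*j}=\delta^i_\omega$ if $i\in X(\omega)\cup\{j\}$ and $\delta^i_{\omega*j}=\delta^i_\omega-\delta^j_\omega$ if $i\in Y(\omega)\setminus\{j\}$. Define (Minkowski sums) $B_\varepsilon=\{0\}$, $B_{\omega*j}=B_\omega+\{0,\delta^j_\omega\}$, $B_{\omega*j^\infty}=B_\omega+\mathbb{Z}_{\ge0}\delta^j_\omega$, $B_{\omega*j^\infty*\mathsf{ext}}=B_\omega+\mathbb{Z}\delta^j_\omega$,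 and $Z_\omega=-B_\omega$. Define $V_\varepsilon=\{0\}$, $V_{\omega*j}=V_{\omega*j^\infty}=V_\omega$, $V_{\omega*j^\infty*\mathsf{ext}}=V_\omega+\mathbb{Z}\delta^j_\omega$. *)

(* Defs.v *)
(* Vectors of Z^n are row vectors 'rV[int]_n; subsets of Z^n
   are predicates 'rV[int]_n -> Prop. *)
From HB Require Import structures.
From mathcomp Require Import all_boot all_order all_algebra.
Set Implicit Arguments. Unset Strict Implicit. Unset Printing Implicit Defensive.
Import Order.TTheory GRing.Theory Num.Theory.
Local Open Scope ring_scope.

(* The alphabet L = {1..n, 1^oo..n^oo, ext}; indices are 'I_n = {0..n-1}. *)
Inductive letter (n : nat) : Type :=
  | Fin of 'I_n
  | Inf of 'I_n
  | Ext.
Arguments Ext {n}.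

Definition word n := seq (letter n).

Definition is_Fin n (j : 'I_n) (a : letter n) : bool :=
  if a is Fin k then k == j else false.
Definition is_Inf n (j : 'I_n) (a : letter n) : bool :=
  if a is Inf k then k == j else false.
Definition is_any_Inf n (a : letter n) : bool :=
  if a is Inf _ then true else false.
Definition is_Ext n (a : letter n) : bool :=
  if a is Ext then true else false.

Definition admissible n (w : word n) : Prop :=
  (forall (j : 'I_n) (p q : nat), (q < size w)%N -> (p < q)%N ->
      is_Inf j (nth Ext w p) ->
      ~~ is_Fin j (nth Ext w q) /\ ~~ is_Inf j (nth Ext w q)) /\
  (forall p : nat, (p.+1 < size w)%N -> is_any_Inf (nth Ext w p) ->
      is_Ext (nth Ext w p.+1)) /\
  (forall p : nat, (p < size w)%N -> is_Ext (nth Ext w p) ->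
      exists2 p', p = p'.+1 & is_any_Inf (nth Ext w p')).

Definition Xb n (w : word n) (j : 'I_n) : bool :=
  has (fun p => [&& (p.+1 < size w)%N, is_Inf j (nth Ext w p)
                 & is_Ext (nth Ext w p.+1)])
      (iota 0 (size w)).

(* delta, computed on the reversed word: delta_rev (rev w) i = delta^i_w *)
Fixpoint delta_rev n (r : word n) (i : 'I_n) : 'rV[int]_n :=
  match r with
  | [::] => delta_mx 0 i
  | Fin j :: r' =>
      if Xb (rev r') i || (i == j) then delta_rev r' i
      else delta_rev r' i - delta_rev r' j
  | _ :: r' => delta_rev r' i
  end.

Definition delta n (w : word n) (i : 'I_n) : 'rV[int]_n := delta_rev (rev w) i.

Definition vset n := 'rV[int]_n -> Prop.
Definition msum n (A B : vset n) : vset n :=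
  fun v => exists a b, A a /\ B b /\ v = a + b.
Definition set0v n : vset n := fun v => v = 0.
Definition seg01 n (d : 'rV[int]_n) : vset n := fun v => v = 0 \/ v = d.
Definition rayN n (d : 'rV[int]_n) : vset n :=
  fun v => exists k : nat, v = d *+ k.
Definition lineZ n (d : 'rV[int]_n) : vset n :=
  fun v => exists k : int, v = d *~ k.

(* B and V, computed on the reversed word. The clause "Ext :: r" with r not
   starting with some j^oo never arises for admissible words; we set it to
   leave the set unchanged. *)
Fixpoint B_rev n (r : word n) : vset n :=
  match r with
  | [::] => @set0v n
  | Fin j :: r' => msum (B_rev r') (seg01 (delta_rev r' j))
  | Inf j :: r' => msum (B_rev r') (rayN (delta_rev r' j))
  | Ext :: Inf j :: r' => msum (B_rev r') (lineZ (delta_rev r' j))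
  | Ext :: r' => B_rev r'
  end.

Fixpoint V_rev n (r : word n) : vset n :=
  match r with
  | [::] => @set0v n
  | Fin _ :: r' => V_rev r'
  | Inf _ :: r' => V_rev r'
  | Ext :: Inf j :: r' => msum (V_rev r') (lineZ (delta_rev r' j))
  | Ext :: r' => V_rev r'
  end.

Definition B n (w : word n) : vset n := B_rev (rev w).
Definition V n (w : word n) : vset n := V_rev (rev w).
Definition Zset n (w : word n) : vset n := fun v => B w (- v).

Definition spanX n (w : word n) : vset n :=
  fun v => exists c : 'I_n -> int,
    v = \sum_(j < n | Xb w j) delta w j *~ c j.

(* Main.v *)
Require Import Defs.
From mathcomp Require Import all_boot all_order all_algebra.
Set Implicit Arguments. Unset Strict Implicit. Unset Printing Implicit Defensive.
Import Order.TTheory GRing.Theory Num.Theory.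
Local Open Scope ring_scope.

Section S.
Variable n : nat.
Implicit Types (w : word n) (r : word n) (u v : 'rV[int]_n).

Fixpoint phi_rev r (i : 'I_n) v : int :=
  match r with
  | [::] => v 0 i
  | Fin j :: r' => phi_rev r' i v + (i == j)%:R *
        \sum_(l < n | ~~ Xb (rev r') l && (l != j)) phi_rev r' l v
  | _ :: r' => phi_rev r' i v
  end.
Definition phi w i v := phi_rev (rev w) i v.

Lemma phiD r i u v : phi_rev r i (u + v) = phi_rev r i u + phi_rev r i v.
Proof.
elim: r i => [|a r IH] i /=; first by rewrite mxE.
case: a => [j|j|]; rewrite ?IH //.
by rewrite (eq_bigr _ (fun l _ => IH l)) big_split /= mulrDr addrACA.
Qed.

Lemma phi0 r i : phi_rev r i 0 = 0.
Proof. by apply: (addrI (phi_rev r i 0)); rewrite -phiD !addr0. Qed.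

Lemma phiN r i u : phi_rev r i (- u) = - phi_rev r i u.
Proof. by apply/eqP; rewrite -addr_eq0 -phiD addNr phi0. Qed.

Lemma phiMn r i u k : phi_rev r i (u *+ k) = phi_rev r i u *+ k.
Proof. by elim: k => [|k IH]; rewrite ?mulr0n ?phi0 // !mulrS phiD IH. Qed.

Lemma phiMz r i u k : phi_rev r i (u *~ k) = phi_rev r i u * k.
Proof.
case: k => k.
  by rewrite -pmulrn phiMn -mulrzz pmulrn.
by rewrite NegzE !mulrNz phiN -pmulrn phiMn mulrN -mulrzz pmulrn.
Qed.

Lemma XbP w j : reflect (exists p, [&& (p.+1 < size w)%N, is_Inf j (nth Ext w p) & is_Ext (nth Ext w p.+1)]) (Xb w j).
Proof.
apply: (iffP hasP) => [[p _ H]|[p H]]; first by exists p.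
exists p => //; rewrite mem_iota /= add0n; case/and3P: H => H _ _; exact: ltnW.
Qed.

Lemma Xb_rcons w a j : Xb (rcons w a) j = Xb w j || (is_Ext a && is_Inf j (last Ext w)).
Proof.
apply/XbP/orP.
- case=> p /and3P[]; rewrite size_rcons ltnS => hp; rewrite !nth_rcons.
  have hp' : (p < size w)%N by [].
  rewrite hp'; case: ltnP => h2 h3 h4.
    by left; apply/XbP; exists p; rewrite h2 h3 h4.
  have e : p.+1 = size w by apply/eqP; rewrite eqn_leq hp.
  move: h4; rewrite e eqxx => h4; right; rewrite h4 /=.
  by rewrite -nth_last -e.
- case => [/XbP [p /and3P[h1 h2 h3]]|/andP[ha hl]].
    exists p; rewrite size_rcons !nth_rcons h1 (ltnW h1) h2 h3 /=.
    by rewrite andbT ltnS ltnW.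
  case: w hl => [|x s] hl //.
  exists (size s); rewrite !nth_rcons size_rcons /= !ltnSn ltnn eqxx ha andbT /=.
  by rewrite -nth_last in hl.
Qed.

Lemma adm_rcons w a : admissible (rcons w a) -> admissible w.
Proof.
case=> [h1 [h2 h3]]; split; [|split].
- move=> j p q hq hpq hp.
  have := h1 j p q; rewrite size_rcons !nth_rcons hq (ltn_trans hpq hq).
  by apply => //; rewrite ltnS ltnW.
- move=> p hp hi.
  have := h2 p; rewrite size_rcons !nth_rcons hp (ltnW hp).
  by apply => //; rewrite ltnS ltnW.
- move=> p hp he.
  have [||p' e hi] := h3 p; rewrite ?size_rcons ?nth_rcons ?hp //.
    by rewrite ltnS ltnW.
  exists p' => //; move: hi; rewrite nth_rcons.
  by have -> : (p' < size w)%N by rewrite -ltnS -e ltnW.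
Qed.

Lemma adm_notX w a j : admissible (rcons w a) -> is_Fin j a || is_Inf j a -> ~~ Xb w j.
Proof.
case=> [h1 _] ha; apply/negP => /XbP [p /and3P[hp hi _]].
have := h1 j p (size w); rewrite size_rcons ltnSn !nth_rcons ltnn eqxx (ltnW hp).
case/(_ isT isT hi) => /negbTE e1 /negbTE e2; by rewrite e1 e2 in ha.
Qed.

Lemma adm_ext w : admissible (rcons w Ext) -> exists w' j, w = rcons w' (Inf j).
Proof.
case=> [_ [_ h3]].
have [||p' e hi] := h3 (size w); rewrite ?size_rcons ?nth_rcons ?ltnn ?eqxx //.
move: hi; rewrite nth_rcons e ltnSn.
clear h3; case/lastP: w e => [|w' x] //; rewrite size_rcons => -[e]; subst p'.
rewrite nth_rcons ltnn eqxx; case: x => // j _; by exists w', j.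
Qed.

Lemma deltaF w j i : delta (rcons w (Fin j)) i =
  if Xb w i || (i == j) then delta w i else delta w i - delta w j.
Proof. by rewrite /delta rev_rcons /= revK. Qed.
Lemma deltaI w j i : delta (rcons w (Inf j)) i = delta w i.
Proof. by rewrite /delta rev_rcons. Qed.
Lemma deltaE w i : delta (rcons w Ext) i = delta w i.
Proof. by rewrite /delta rev_rcons. Qed.
Lemma phiF w j i v : phi (rcons w (Fin j)) i v = phi w i v + (i == j)%:R *
   \sum_(l < n | ~~ Xb w l && (l != j)) phi w l v.
Proof. by rewrite /phi rev_rcons /= revK. Qed.
Lemma phiI w j i v : phi (rcons w (Inf j)) i v = phi w i v.
Proof. by rewrite /phi rev_rcons. Qed.
Lemma phiE w i v : phi (rcons w Ext) i v = phi w i v.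
Proof. by rewrite /phi rev_rcons. Qed.
Lemma BF w j : B (rcons w (Fin j)) = msum (B w) (seg01 (delta w j)).
Proof. by rewrite /B rev_rcons. Qed.
Lemma BI w j : B (rcons w (Inf j)) = msum (B w) (rayN (delta w j)).
Proof. by rewrite /B rev_rcons. Qed.
Lemma BE w j : B (rcons (rcons w (Inf j)) Ext) = msum (B w) (lineZ (delta w j)).
Proof. by rewrite /B !rev_rcons. Qed.
Lemma VF w j : V (rcons w (Fin j)) = V w.
Proof. by rewrite /V rev_rcons. Qed.
Lemma VI w j : V (rcons w (Inf j)) = V w.
Proof. by rewrite /V rev_rcons. Qed.
Lemma VE w j : V (rcons (rcons w (Inf j)) Ext) = msum (V w) (lineZ (delta w j)).
Proof. by rewrite /V !rev_rcons. Qed.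
Lemma XF w j i : Xb (rcons w (Fin j)) i = Xb w i.
Proof. by rewrite Xb_rcons orbF. Qed.
Lemma XI w j i : Xb (rcons w (Inf j)) i = Xb w i.
Proof. by rewrite Xb_rcons orbF. Qed.
Lemma XE w j i : Xb (rcons (rcons w (Inf j)) Ext) i = Xb w i || (i == j).
Proof. by rewrite Xb_rcons XI last_rcons /= eq_sym. Qed.

Definition Inv w :=
 [/\ forall v, v = \sum_i delta w i *~ phi w i v,
     forall i k, phi w i (delta w k) = (i == k)%:R,
     forall v, B w v -> forall i, ~~ Xb w i -> 0 <= phi w i v,
     forall v, V w v <-> spanX w v &
     forall v, spanX w v -> B w v].

Lemma Inv0 : Inv [::].
Proof.
split.
- move=> v; rewrite {1}[v]row_sum_delta; apply: eq_bigr => i _.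
  by rewrite -scaler_int intz.
- by move=> i k; rewrite /phi /delta /= mxE eqxx eq_sym.
- by move=> v -> i _; rewrite /phi /= mxE.
- move=> v; split; first by move=> ->; exists (fun _ => 0); rewrite big_pred0.
  by move=> [c ->]; rewrite big_pred0.
- by move=> v [c ->]; rewrite big_pred0.
Qed.

Lemma phiDw w i u v : phi w i (u + v) = phi w i u + phi w i v.
Proof. exact: phiD. Qed.
Lemma phiNw w i u : phi w i (- u) = - phi w i u.
Proof. exact: phiN. Qed.
Lemma phiBw w i u v : phi w i (u - v) = phi w i u - phi w i v.
Proof. by rewrite phiDw phiNw. Qed.
Lemma phiMn' w i u k : phi w i (u *+ k) = phi w i u *+ k.
Proof. exact: phiMn. Qed.
Lemma phiMz' w i u k : phi w i (u *~ k) = phi w i u * k.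
Proof. exact: phiMz. Qed.
Lemma phi0w w i : phi w i 0 = 0.
Proof. exact: phi0. Qed.

Lemma InvF w j : Inv w -> Inv (rcons w (Fin j)).
Proof.
case=> Ha Hb Hc Hd He.
set S := fun v => \sum_(l < n | ~~ Xb w l && (l != j)) phi w l v.
have Hge : forall x i, (forall l, ~~ Xb w l -> 0 <= phi w l x) -> ~~ Xb w i ->
    0 <= phi (rcons w (Fin j)) i x.
  move=> x i H hi; rewrite phiF; apply: addr_ge0; first exact: H.
  apply: mulr_ge0; first exact: ler0n.
  by apply: sumr_ge0 => l /andP[yl _]; apply: H.
have Hspan : forall c, \sum_(k < n | Xb (rcons w (Fin j)) k) delta (rcons w (Fin j)) k *~ c k
     = \sum_(k < n | Xb w k) delta w k *~ c k.
  move=> c; rewrite (eq_bigl _ _ (XF w j)); apply: eq_bigr => k hk.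
  by rewrite deltaF hk.
split.
- move=> v.
  have claim : forall i, delta (rcons w (Fin j)) i *~ phi (rcons w (Fin j)) i v =
     delta w i *~ phi w i v + delta w j *~ ((i == j)%:R * S v - (~~ Xb w i && (i != j))%:R * phi w i v).
    move=> i; rewrite deltaF phiF -/(S v).
    case: (eqVneq i j) => [->|nij].
      by rewrite orbT /= mul1r andbF mul0r subr0 mulrzDr.
    rewrite mul0r addr0 sub0r andbT orbF.
    case: (Xb w i) => /=; first by rewrite mul0r oppr0 mulr0z addr0.
    by rewrite mul1r mulrNz mulrzBl.
  rewrite (eq_bigr _ (fun i _ => claim i)) big_split /= -(Ha v) -mulrz_sumr.
  rewrite sumrB.
  have -> : \sum_(i < n) (i == j)%:R * S v = S v.
    rewrite (bigD1 j) //= eqxx mul1r big1 ?addr0 // => i /negbTE ->.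
    by rewrite mul0r.
  have -> : \sum_(i < n) (~~ Xb w i && (i != j))%:R * phi w i v = S v.
    rewrite /S /= [RHS]big_mkcond /=; apply: eq_bigr => i _.
    by case: ifP => _; rewrite ?mul1r ?mul0r.
  by rewrite subrr mulr0z addr0.
- move=> i k; rewrite deltaF; case: ifP => hk.
    rewrite phiF Hb big1 ?mulr0 ?addr0 // => l /andP[yl lj].
    rewrite Hb; case: (eqVneq l k) => // elk.
    by move: hk; rewrite -elk (negbTE yl) (negbTE lj).
  move/negbT: hk; rewrite negb_or => /andP[yk kj].
  rewrite phiF !phiBw !Hb.
  rewrite (eq_bigr (fun l => (l == k)%:R - (l == j)%:R)); last by move=> l _; rewrite phiBw !Hb.
  rewrite sumrB (bigD1 k) /=; last by rewrite yk kj.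
  rewrite eqxx !big1 => [|l /andP[_ /negbTE ->]|l /andP[_ /negbTE ->]] //.
  by rewrite /= mulr1n addr0 subr0 mulr1 subrK.
- move=> v; rewrite BF => -[a [d [hBa [hd ->]]]] i.
  rewrite XF => hi; rewrite /phi phiD -!/(phi _ _ _); apply: addr_ge0.
    by apply: Hge => // l hl; apply: Hc.
  apply: Hge => // l hl; case: hd => ->; first by rewrite phi0w.
  by rewrite Hb ler0n.
- move=> v; rewrite VF; split.
    by case/Hd => c ->; exists c; rewrite Hspan.
  by case=> c ->; apply/Hd; exists c; rewrite Hspan.
- move=> v [c]; rewrite Hspan => ev; rewrite BF; exists v, 0; split.
    by apply: He; exists c.
  by split; [left | rewrite addr0].
Qed.

Lemma InvI w j : Inv w -> Inv (rcons w (Inf j)).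
Proof.
case=> Ha Hb Hc Hd He.
have Hspan : forall c, \sum_(k < n | Xb (rcons w (Inf j)) k) delta (rcons w (Inf j)) k *~ c k
     = \sum_(k < n | Xb w k) delta w k *~ c k.
  move=> c; rewrite (eq_bigl _ _ (XI w j)); apply: eq_bigr => k hk.
  by rewrite deltaI.
split.
- move=> v; rewrite {1}(Ha v); apply: eq_bigr => i _; by rewrite deltaI phiI.
- by move=> i k; rewrite deltaI phiI Hb.
- move=> v; rewrite BI => -[a [d [hBa [[k ->] ->]]]] i.
  rewrite XI => hi; rewrite phiI phiDw phiMn' ?Hb.
  by apply: addr_ge0; [apply: Hc | apply: mulrn_wge0; apply: ler0n].
- move=> v; rewrite VI; split.
    by case/Hd => c ->; exists c; rewrite Hspan.
  by case=> c ->; apply/Hd; exists c; rewrite Hspan.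
- move=> v [c]; rewrite Hspan => ev; rewrite BI; exists v, 0; split.
    by apply: He; exists c.
  by split; [exists 0%N | rewrite addr0].
Qed.

Lemma sumXE w j (F : 'I_n -> 'rV[int]_n) : ~~ Xb w j ->
  \sum_(k < n | Xb (rcons (rcons w (Inf j)) Ext) k) F k = F j + \sum_(k < n | Xb w k) F k.
Proof.
move=> hj; rewrite (bigD1 j) /=; last by rewrite XE eqxx orbT.
congr (_ + _); apply: eq_bigl => k; rewrite XE.
by case: (eqVneq k j) => [->|]; rewrite ?(negbTE hj) ?orbF ?andbT.
Qed.

Lemma InvE w j : Inv w -> ~~ Xb w j -> Inv (rcons (rcons w (Inf j)) Ext).
Proof.
case=> Ha Hb Hc Hd He hj.
have dE : forall k, delta (rcons (rcons w (Inf j)) Ext) k = delta w k.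
  by move=> k; rewrite deltaE deltaI.
have pE : forall k v, phi (rcons (rcons w (Inf j)) Ext) k v = phi w k v.
  by move=> k v; rewrite phiE phiI.
have Hs : forall c, \sum_(k < n | Xb (rcons (rcons w (Inf j)) Ext) k)
    delta (rcons (rcons w (Inf j)) Ext) k *~ c k =
    delta w j *~ c j + \sum_(k < n | Xb w k) delta w k *~ c k.
  by move=> c; rewrite sumXE //; congr (_ + _); [rewrite dE | apply: eq_bigr => k _; rewrite dE].
split.
- move=> v; rewrite {1}(Ha v); apply: eq_bigr => i _; by rewrite dE pE.
- by move=> i k; rewrite dE pE Hb.
- move=> v; rewrite BE => -[a [d [hBa [[k ->] ->]]]] i.
  rewrite XE negb_or => /andP[hi hij]; rewrite pE phiDw phiMz' Hb (negbTE hij) mul0r addr0.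
  exact: Hc.
- move=> v; rewrite VE; split.
    case=> a [d [/Hd [c ->] [[k ->] ->]]].
    exists (fun l => if l == j then k else c l); rewrite Hs eqxx addrC; congr (_ + _).
    apply: eq_bigr => l hl; case: (eqVneq l j) => // elj.
    by move: hl; rewrite elj (negbTE hj).
  case=> c ->; rewrite Hs; exists (\sum_(k < n | Xb w k) delta w k *~ c k), (delta w j *~ c j).
  split; first by apply/Hd; exists c.
  by split; [exists (c j) | rewrite addrC].
- move=> v [c ->]; rewrite Hs BE; exists (\sum_(k < n | Xb w k) delta w k *~ c k), (delta w j *~ c j).
  split; first by apply: He; exists c.
  by split; [exists (c j) | rewrite addrC].
Qed.

Lemma InvAll N : forall w, (size w < N)%N -> admissible w -> Inv w.
Proof.
elim: N => // N IH w; case/lastP: w => [|w a] hs ha; first exact: Inv0.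
rewrite size_rcons ltnS in hs; have hw := adm_rcons ha.
case: a ha => [j|j|] ha.
- exact/InvF/IH.
- exact/InvI/IH.
- have [w' [j ew]] := adm_ext ha; subst w.
  apply: InvE; first by apply: IH (adm_rcons hw); rewrite size_rcons in hs; exact: ltnW.
  by apply: (adm_notX hw); rewrite /= eqxx.
Qed.
End S.

Theorem mainTheorem12 (n : nat) (w : word n) :
  admissible w ->
  (forall v : 'rV[int]_n, V w v <-> (B w v /\ Zset w v)) /\
  (forall v : 'rV[int]_n, V w v <-> spanX w v).
Proof.
move=> hw; have [Ha Hb Hc Hd He] := InvAll (ltnSn (size w)) hw.
split=> // v; split.
  case/Hd => c ev; split; first by apply: He; exists c.
  rewrite /Zset; apply: He; exists (fun k => - c k).
  by rewrite ev -sumrN; apply: eq_bigr => k _; rewrite mulrNz.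
case=> hB hZ; apply/Hd; exists (fun k => phi w k v).
rewrite {1}(Ha v) (bigID (fun k => Xb w k)) /= [X in _ + X]big1 ?addr0 // => i hi.
have h1 := Hc v hB i hi; have h2 := Hc _ hZ i hi.
rewrite phiNw oppr_ge0 in h2.
by have -> : phi w i v = 0 by apply: le_anti; rewrite h1 h2.
Qed.
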